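(* For every $x\in\mathbb R\setminus\{0\}$, $$\exp\Big(\frac{x^2}2-\frac{x^4}{12}\Big)<\cosh(x)<\Big(1+\frac{x^2}3\Big)\exp\Big(\frac{x^2}6\Big).$$ *)

(* Defs.v *)
From Stdlib Require Import Reals.

(* Main.v *)
Require Import Defs.
From Stdlib Require Import Reals Lra.
From Coquelicot Require Import Coquelicot.
Open Scope R_scope.

Ltac norm_exp := repeat match goal with
 | |- context [exp ?a] => match goal with |- context [exp ?b] =>
     lazymatch a with b => fail | _ => let H := fresh in assert (H : a = b) by field; rewrite H; clear H end end end.

Lemma incr (f f' : R -> R) b : 0 < b ->
  (forall c, 0 <= c <= b -> is_derive f c (f' c)) ->
  (forall c, 0 < c < b -> 0 < f' c) -> f 0 < f b.
Proof.
intros hb hd hp.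
destruct (MVT_cor2 f f' 0 b hb) as [c [hc1 hc2]].
- intros c hc; apply is_derive_Reals; auto.
- assert (0 < f' c * (b - 0)) by (apply Rmult_lt_0_compat; [apply hp; lra| lra]). lra.
Qed.

Lemma sinh_pos c : 0 < c -> 0 < (exp c - exp (-c)) / 2.
Proof. intros h. assert (exp (-c) < exp c) by (apply exp_increasing; lra). lra. Qed.

Lemma cosh_pos c : 0 < (exp c + exp (-c)) / 2.
Proof. assert (H1 := exp_pos c). assert (H2 := exp_pos (-c)). lra. Qed.

Lemma q_pos b : 0 < b -> 0 < b * ((exp b + exp (-b)) / 2) - (exp b - exp (-b)) / 2.
Proof.
intros hb.
set (f := fun x => x * ((exp x + exp (-x)) / 2) - (exp x - exp (-x)) / 2).
assert (f 0 < f b).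
{ apply (incr f (fun x => x * ((exp x - exp (-x)) / 2))); auto.
  - intros c _. unfold f. auto_derive; auto. norm_exp. field.
  - intros c hc. apply Rmult_lt_0_compat; [lra| apply sinh_pos; lra]. }
unfold f in H. rewrite Ropp_0, exp_0 in H. lra.
Qed.

Lemma h_pos b : 0 < b -> 0 < (exp b - exp (-b)) / 2 - (b - b^3/3) * ((exp b + exp (-b)) / 2).
Proof.
intros hb.
set (f := fun x => (exp x - exp (-x)) / 2 - (x - x^3/3) * ((exp x + exp (-x)) / 2)).
assert (f 0 < f b).
{ apply (incr f (fun x => x * (x * ((exp x + exp (-x)) / 2) - (exp x - exp (-x)) / 2)
     + x^3/3 * ((exp x - exp (-x)) / 2))); auto.
  - intros c _. unfold f. auto_derive; auto. norm_exp. field.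
  - intros c hc. assert (H1 := q_pos c ltac:(lra)). assert (H2 := sinh_pos c ltac:(lra)).
    assert (0 < c^3/3) by (assert (0 < c^3) by (apply pow_lt; lra); lra).
    assert (0 < c * (c * ((exp c + exp (-c)) / 2) - (exp c - exp (-c)) / 2)) by (apply Rmult_lt_0_compat; lra).
    assert (0 < c ^ 3 / 3 * ((exp c - exp (- c)) / 2)) by (apply Rmult_lt_0_compat; lra).
    lra. }
unfold f in H. rewrite Ropp_0, exp_0 in H. lra.
Qed.

Lemma p_pos b : 0 < b -> 0 < b*(9+b^2) * ((exp b + exp (-b)) / 2) - 3*(3+b^2)*((exp b - exp (-b)) / 2).
Proof.
intros hb.
set (f := fun x => x*(9+x^2) * ((exp x + exp (-x)) / 2) - 3*(3+x^2)*((exp x - exp (-x)) / 2)).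
assert (f 0 < f b).
{ apply (incr f (fun x => x*(3+x^2) * ((exp x - exp (-x)) / 2))); auto.
  - intros c _. unfold f. auto_derive; auto. norm_exp. field.
  - intros c hc. apply Rmult_lt_0_compat; [|apply sinh_pos; lra].
    apply Rmult_lt_0_compat; [lra|]. assert (0 <= c^2) by (apply pow2_ge_0). lra. }
unfold f in H. rewrite Ropp_0, exp_0 in H. lra.
Qed.

Lemma lower b : 0 < b -> exp (b ^ 2 / 2 - b ^ 4 / 12) < cosh b.
Proof.
intros hb.
set (f := fun x => ((exp x + exp (-x)) / 2) * exp (-(x^2/2 - x^4/12))).
assert (f 0 < f b).
{ apply (incr f (fun x => exp (-(x^2/2 - x^4/12)) *
     ((exp x - exp (-x)) / 2 - (x - x^3/3) * ((exp x + exp (-x)) / 2)))); auto.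
  - intros c _. unfold f. auto_derive; auto. norm_exp. field.
  - intros c hc. apply Rmult_lt_0_compat; [apply exp_pos| apply h_pos; lra]. }
unfold f in H. rewrite Ropp_0, exp_0 in H.
replace (- (0 ^ 2 / 2 - 0 ^ 4 / 12)) with 0 in H by field. rewrite exp_0 in H.
unfold cosh.
assert (He : exp (b ^ 2 / 2 - b ^ 4 / 12) * exp (- (b ^ 2 / 2 - b ^ 4 / 12)) = 1)
  by (rewrite <- exp_plus; replace (_ + _) with 0 by field; apply exp_0).
assert (Hp := exp_pos (b ^ 2 / 2 - b ^ 4 / 12)).
assert (1 * exp (b ^ 2 / 2 - b ^ 4 / 12) < ((exp b + exp (- b)) / 2 * exp (- (b ^ 2 / 2 - b ^ 4 / 12))) * exp (b ^ 2 / 2 - b ^ 4 / 12)).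
{ apply Rmult_lt_compat_r; lra. }
rewrite Rmult_assoc, (Rmult_comm (exp (- _))), He in H0. lra.
Qed.

Lemma upper b : 0 < b -> cosh b < (1 + b ^ 2 / 3) * exp (b ^ 2 / 6).
Proof.
intros hb.
set (f := fun x => (1 + x ^ 2 / 3) * exp (x ^ 2 / 6) / ((exp x + exp (-x)) / 2)).
assert (f 0 < f b).
{ apply (incr f (fun x => exp (x^2/6) / (9 * ((exp x + exp (-x)) / 2)^2) *
   (x*(9+x^2) * ((exp x + exp (-x)) / 2) - 3*(3+x^2)*((exp x - exp (-x)) / 2)))); auto.
  - intros c _. unfold f. assert (H := cosh_pos c). auto_derive.
    + lra.
    + norm_exp. field. lra.
  - intros c hc. apply Rmult_lt_0_compat; [|apply p_pos; lra].
    apply Rdiv_lt_0_compat; [apply exp_pos|]. assert (H := cosh_pos c).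
    assert (0 < ((exp c + exp (- c)) / 2)^2) by (apply pow_lt; lra). lra. }
unfold f in H. rewrite Ropp_0, exp_0 in H.
replace (0 ^ 2 / 6) with 0 in H by field. rewrite exp_0 in H.
replace ((1 + 0 ^ 2 / 3) * 1 / ((1 + 1) / 2)) with 1 in H by field.
assert (Hc := cosh_pos b). unfold cosh.
apply (Rmult_lt_compat_r ((exp b + exp (- b)) / 2)) in H; [|lra].
replace ((1 + b ^ 2 / 3) * exp (b ^ 2 / 6) / ((exp b + exp (- b)) / 2) * ((exp b + exp (- b)) / 2)) with ((1 + b ^ 2 / 3) * exp (b ^ 2 / 6)) in H by (field; lra). lra.
Qed.

Theorem lemma2p2 (x : R) (hx : x <> 0) :
  exp (x ^ 2 / 2 - x ^ 4 / 12) < cosh x /\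
  cosh x < (1 + x ^ 2 / 3) * exp (x ^ 2 / 6).
Proof.
destruct (Rlt_or_le 0 x) as [h|h].
- split; [apply lower|apply upper]; auto.
- assert (0 < -x) by lra.
  assert (Hc : cosh (-x) = cosh x) by (unfold cosh; rewrite Ropp_involutive; field).
  replace (x^2) with ((-x)^2) by field. replace (x^4) with ((-x)^4) by field.
  rewrite <- Hc. split; [apply lower|apply upper]; auto.
Qed.
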